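(* Let $n\ge1$ and let $\pi\in\mathfrak{S}_n$ be a two-stack sortable permutation. Write $\pi=\pi_\ell\cdot(n)\cdot\pi_r$, where $\pi_\ell$ (resp. $\pi_r$) is the part of $\pi$ before (resp. after) the entry $n$, and let $\pi_1=P(\pi_\ell)$, $\pi_2=P(\pi_r)$. Then each of $\pi_1,\pi_2$ is either the empty permutation or a two-stack sortable permutation.
   Context: For a finite sequence $A$ of distinct integers, the stack-sorting operator $\mathcal{S}$ is defined by $\mathcal{S}(\epsilon)=\epsilon$ for the empty sequence and, if $A$ is non-empty with largest element $m$, writing $A=A_L\cdot(m)\cdot A_R$ (concatenation), $\mathcal{S}(A)=\mathcal{S}(A_L)\cdot\mathcal{S}(A_R)\cdot(m)$. A permutation $\sigma\in\mathfrak{S}_n$ ($n\ge1$), viewed as a sequence, is two-stack sortable if $\mathcal{S}(\mathcal{S}(\sigma))$ is the identity; the empty permutation is not considered two-stack sortable. For a sequence $A$ of distinct integers, $P(A)$ is its standardization: the permutation of $\{1,\dots,\operatorname{len}(A)\}$ having the same relative order as $A$ (with $P(\epsilon)=\epsilon$). *)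

(* Defs.v *)
From mathcomp Require Import all_boot.
Set Implicit Arguments. Unset Strict Implicit. Unset Printing Implicit Defensive.

(* Sequences of distinct integers are represented as [seq nat]
   (permutations of {1..n} have positive entries; standardizations likewise). *)

(* Stack-sorting operator with fuel (fuel >= size s suffices). *)
Fixpoint stack_sort_fuel (fuel : nat) (s : seq nat) : seq nat :=
  match fuel with
  | 0 => s
  | f.+1 =>
    match s with
    | [::] => [::]
    | x :: _ =>
      let m := foldr maxn 0 s in
      let i := index m s in
      stack_sort_fuel f (take i s) ++ stack_sort_fuel f (drop i.+1 s) ++ [:: m]
    end
  end.

Definition stack_sort (s : seq nat) : seq nat := stack_sort_fuel (size s) s.

Definition is_perm (n : nat) (s : seq nat) : bool := perm_eq s (iota 1 n).

Definition two_stack_sortable (s : seq nat) : Prop :=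
  0 < size s /\ is_perm (size s) s /\ stack_sort (stack_sort s) = iota 1 (size s).

Definition standardize (s : seq nat) : seq nat :=
  [seq (count (fun y => y < x) s).+1 | x <- s].

(* Main.v *)
Require Import Defs.
From mathcomp Require Import all_boot.
From mathcomp Require Import zify.
Set Implicit Arguments. Unset Strict Implicit. Unset Printing Implicit Defensive.

Lemma max_ge s : all (fun x => x <= foldr maxn 0 s) s.
Proof.
elim: s => //= x s IH; rewrite leq_maxl /=.
by apply: sub_all IH => y /leq_trans; apply; rewrite leq_maxr.
Qed.

Lemma max_in s : s != [::] -> foldr maxn 0 s \in s.
Proof.
elim: s => // x s IH _; case: s IH => [|y s] IH; first by rewrite /= maxn0 inE.
have {}IH := IH isT.
rewrite (_ : foldr maxn 0 (x :: y :: s) = maxn x (foldr maxn 0 (y :: s))) //.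
move: IH; set F := foldr maxn 0 (y :: s) => IH.
rewrite in_cons; case: (leqP x F) => h.
  by rewrite IH orbT.
by rewrite eqxx.
Qed.

Lemma foldr_max_le m s : all (fun x => x <= m) s -> foldr maxn m s = m.
Proof. by elim: s => //= x s IH /andP[h /IH ->]; apply/maxn_idPr. Qed.

Lemma foldr_max0_le m s : all (fun x => x <= m) s -> foldr maxn 0 s <= m.
Proof. by elim: s => //= x s IH /andP[h /IH h']; rewrite geq_max h h'. Qed.

Lemma notin_take_index (y : nat) s : y \notin take (index y s) s.
Proof.
elim: s => //= x s IH; case: eqP => [->|/eqP ne] //=.
by rewrite inE negb_or eq_sym ne IH.
Qed.

Lemma ssf_cons f X : X != [::] -> stack_sort_fuel f.+1 X =
  stack_sort_fuel f (take (index (foldr maxn 0 X) X) X) ++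
  stack_sort_fuel f (drop (index (foldr maxn 0 X) X).+1 X) ++ [:: foldr maxn 0 X].
Proof. by case: X. Qed.

Lemma fuelE n s f : size s <= n -> size s <= f ->
  stack_sort_fuel f s = stack_sort s.
Proof.
elim: n s f => [|n IH] s f; first by case: s; case: f.
case: s => [|x s]; first by case: f.
case: f => // f hn hf.
rewrite /stack_sort [size _]/= !ssf_cons //.
rewrite /= in hn hf.
set X := x :: s.
set M := foldr maxn 0 X.
have hM : M \in X by exact: max_in.
have hi : index M X < size X by rewrite index_mem.
have h1 : size (take (index M X) X) <= size s.
  by rewrite size_take hi; rewrite /= in hi.
have h2 : size (drop (index M X).+1 X) <= size s.
  by rewrite size_drop /=; lia.
have hn' : size s <= n by []. have hf' : size s <= f by [].
rewrite (IH _ f (leq_trans h1 hn') (leq_trans h1 hf')).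
rewrite (IH _ (size s) (leq_trans h1 hn') h1).
rewrite (IH _ f (leq_trans h2 hn') (leq_trans h2 hf')).
by rewrite (IH _ (size s) (leq_trans h2 hn') h2).
Qed.

Lemma ss_nil : stack_sort [::] = [::].
Proof. by []. Qed.

Lemma ss_unfold X : X != [::] ->
  stack_sort X = stack_sort (take (index (foldr maxn 0 X) X) X)
    ++ stack_sort (drop (index (foldr maxn 0 X) X).+1 X) ++ [:: foldr maxn 0 X].
Proof.
case: X => // x s _.
rewrite {1}/stack_sort [size _]/= ssf_cons //.
set X := x :: s.
set M := foldr maxn 0 X.
have hM : M \in X by exact: max_in.
have hi : index M X < size X by rewrite index_mem.
have h1 : size (take (index M X) X) <= size s.
  by rewrite size_take hi; rewrite /= in hi.
have h2 : size (drop (index M X).+1 X) <= size s.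
  by rewrite size_drop /=; lia.
by rewrite !(@fuelE (size s)).
Qed.

Lemma ss_split L m R : all (fun x => x < m) L -> all (fun x => x <= m) R ->
  stack_sort (L ++ m :: R) = stack_sort L ++ stack_sort R ++ [:: m].
Proof.
move=> hL hR.
have hmax : foldr maxn 0 (L ++ m :: R) = m.
  rewrite foldr_cat /= (maxn_idPl (foldr_max0_le hR)) foldr_max_le //.
  by apply: sub_all hL => y /ltnW.
have hnot : m \notin L by apply/negP => /(allP hL); rewrite ltnn.
have hidx : index m (L ++ m :: R) = size L.
  by rewrite index_cat (negbTE hnot) /= eqxx addn0.
rewrite ss_unfold; last by case: L {hL hnot hmax hidx}.
rewrite hmax hidx take_size_cat //.
have -> : drop (size L).+1 (L ++ m :: R) = R.
  by clear; elim: L => [|x L IH] /=; rewrite ?drop0.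
by [].
Qed.

Lemma split_max X : X != [::] -> exists L R,
  X = L ++ foldr maxn 0 X :: R /\ all (fun x => x < foldr maxn 0 X) L /\
  all (fun x => x <= foldr maxn 0 X) R.
Proof.
move=> hX; set M := foldr maxn 0 X.
have hM : M \in X by exact: max_in.
exists (take (index M X) X), (drop (index M X).+1 X); split; last split.
- by rewrite -{1}(cat_take_drop (index M X) X) (drop_nth 0) ?index_mem // nth_index.
- apply/allP => y hy; have := notin_take_index M X.
  have hy' : y \in X by apply: mem_take hy.
  have := allP (max_ge X) y hy'; rewrite -/M leq_eqVlt; case/orP => // /eqP eyM.
  by move: hy; rewrite eyM => ->.
- by apply/allP => y /mem_drop hy; exact: (allP (max_ge X) y hy).
Qed.

Lemma ss_perm X : perm_eq (stack_sort X) X.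
Proof.
move: {2}(size X) (leqnn (size X)) => n; elim: n X => [|n IH] X hX.
  by case: X hX.
case: (X =P [::]) => [->//|/eqP hne].
have [L [R [eX [hL hR]]]] := split_max hne.
rewrite eX ss_split //.
have hsL : size L <= n by move: hX; rewrite eX size_cat /=; lia.
have hsR : size R <= n by move: hX; rewrite eX size_cat /=; lia.
apply: perm_cat; first exact: IH.
by rewrite cats1 perm_rcons perm_cons IH.
Qed.

Lemma ss_map (f : nat -> nat) X :
  {in X &, forall x y, x < y -> f x < f y} ->
  stack_sort (map f X) = map f (stack_sort X).
Proof.
move: {2}(size X) (leqnn (size X)) => n; elim: n X => [|n IH] X hX hf.
  by case: X hX hf.
case: (X =P [::]) => [->//|/eqP hne].
have [L [R [eX [hL hR]]]] := split_max hne.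
set M := foldr maxn 0 X in eX hL hR.
have hsL : size L <= n by move: hX; rewrite eX size_cat /=; lia.
have hsR : size R <= n by move: hX; rewrite eX size_cat /=; lia.
have hMX : M \in X by rewrite eX mem_cat inE eqxx orbT.
have hLX : {subset L <= X} by move=> y hy; rewrite eX mem_cat hy.
have hRX : {subset R <= X} by move=> y hy; rewrite eX mem_cat inE hy !orbT.
rewrite eX map_cat /= ss_split; last first.
- apply/allP => _ /mapP [y hy ->].
  have := allP hR y hy; rewrite leq_eqVlt; case/orP => [/eqP -> //|].
  by move/(hf _ _ (hRX _ hy) hMX)/ltnW.
- by apply/allP => _ /mapP [y hy ->]; apply: hf (hLX _ hy) hMX (allP hL y hy).
rewrite ss_split // !map_cat /= IH //; last by move=> x y hx hy; apply: hf; apply: hLX.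
by rewrite IH // => x y hx hy; apply: hf; apply: hRX.
Qed.

Lemma pw3 u v m :
  pairwise ltn (stack_sort u ++ stack_sort v ++ [:: m]) =
  [&& pairwise ltn (stack_sort u), pairwise ltn (stack_sort v),
      allrel ltn u v, all (ltn^~ m) u & all (ltn^~ m) v].
Proof.
rewrite !pairwise_cat allrel_catr !allrel1r /= andbT.
rewrite (perm_all _ (ss_perm u)) (perm_all _ (ss_perm v)).
rewrite (@eq_allrel_mem2 _ _ _ _ u _ v); last exact: perm_mem (ss_perm v).
  2: exact: perm_mem (ss_perm u).
by case: (pairwise _ _); case: (pairwise _ _); case: (allrel _ _ _);
   case: (all _ u); case: (all _ v).
Qed.

Lemma split_uniq (y : nat) L1 R1 L2 R2 : y \notin L1 -> y \notin L2 ->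
  L1 ++ y :: R1 = L2 ++ y :: R2 -> L1 = L2 /\ R1 = R2.
Proof.
move=> h1 h2 e.
have hi : size L1 = size L2.
  have := congr1 (index y) e.
  by rewrite !index_cat (negbTE h1) (negbTE h2) /= eqxx !addn0.
have := congr1 (take (size L1)) e; rewrite {2}hi !take_size_cat // => ->.
split=> //.
have := congr1 (drop (size L1).+1) e.
have dd : forall L R, drop (size L).+1 (L ++ y :: R) = R.
  by move=> L R; elim: L => [|x L IH] /=; rewrite ?drop0.
by rewrite dd hi dd.
Qed.

Lemma split_first (y : nat) A : y \in A -> exists A1 A2, A = A1 ++ y :: A2 /\ y \notin A1.
Proof.
move=> hy; exists (take (index y A) A), (drop (index y A).+1 A); split.
  by rewrite -{1}(cat_take_drop (index y A) A) (drop_nth 0) ?index_mem // nth_index.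
exact: notin_take_index.
Qed.

Lemma sortable_cat n X A B : size X <= n -> X = A ++ B ->
  pairwise ltn (stack_sort X) ->
  pairwise ltn (stack_sort A) && pairwise ltn (stack_sort B).
Proof.
elim: n X A B => [|n IH] X A B hX eX.
  by move: hX; rewrite eX size_cat; case: A {eX}; case: B.
case: (X =P [::]) => [e0|/eqP hne].
  by rewrite e0 in eX; case: A eX => //; case: B.
have [L [R [eL [hL hR]]]] := split_max hne.
set M := foldr maxn 0 X in eL hL hR.
have hML : M \notin L by apply/negP => /(allP hL); rewrite ltnn.
have hsL : size L <= n by move: hX; rewrite eL size_cat /=; lia.
have hsR : size R <= n by move: hX; rewrite eL size_cat /=; lia.
rewrite eL ss_split // pw3 => /and5P[pL pR aLR mL mR].
have hMX : M \in A ++ B by rewrite -eX eL mem_cat inE eqxx orbT.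
case: (boolP (M \in A)) => hMA.
  have [A1 [A2 [eA hA1]]] := split_first hMA.
  have [e1 e2] : L = A1 /\ R = A2 ++ B.
    by apply: split_uniq hML hA1 _; rewrite -eL eX eA -catA.
  have /andP[pA2 ->] := IH R A2 B hsR e2 pR.
  rewrite andbT eA ss_split -?e1 //; last first.
    by move: mR; rewrite e2 all_cat => /andP[h _]; apply/allP => x /(allP h) /ltnW.
  rewrite pw3 pL pA2 mL /=.
  move: aLR mR; rewrite e2 allrel_catr all_cat => /andP[-> _] /andP[-> _] //.
have hMB : M \in B by move: hMX; rewrite mem_cat (negbTE hMA).
have [B1 [B2 [eB hB1]]] := split_first hMB.
have hAB1 : M \notin A ++ B1 by rewrite mem_cat negb_or hMA.
have [e1 e2] : L = A ++ B1 /\ R = B2.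
  by apply: split_uniq hML hAB1 _; rewrite -eL eX eB catA.
have /andP[-> pB1] := IH L A B1 hsL e1 pL.
rewrite /= eB ss_split; last first.
- by rewrite -/M -e2.
- by move: mL; rewrite e1 all_cat => /andP[_ ->].
rewrite pw3 pB1 -e2 pR mR /= andbT.
move: aLR mL; rewrite e1 allrel_catl all_cat => /andP[_ ->] /andP[_ ->] //.
Qed.

Lemma count_lt_mono s x y : x < y -> x \in s ->
  count (fun z => z < x) s < count (fun z => z < y) s.
Proof.
move=> xy; elim: s => //= z s IH; rewrite inE => /orP[/eqP <-|hx].
  rewrite ltnn xy add0n add1n ltnS; apply: sub_count => w /= hw.
  exact: ltn_trans hw xy.
have := IH hx; have : (z < x) <= (z < y).
  by case: (ltnP z x) => // h; rewrite (ltn_trans h xy).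
lia.
Qed.

Definition rk (s : seq nat) x := (count (fun y => y < x) s).+1.

Lemma std_map s : standardize s = map (rk s) s.
Proof. by []. Qed.

Lemma rk_mono s : {in s &, forall x y, x < y -> rk s x < rk s y}.
Proof. by move=> x y hx _ xy; rewrite /rk ltnS; apply: count_lt_mono. Qed.

Lemma std_perm s : uniq s -> perm_eq (standardize s) (iota 1 (size s)).
Proof.
move=> us; rewrite std_map.
have inj : {in s &, injective (rk s)}.
  move=> x y hx hy e; case: (ltngtP x y) => // h.
    by have := rk_mono hx hy h; rewrite e ltnn.
  by have := rk_mono hy hx h; rewrite e ltnn.
have um : uniq (map (rk s) s) by rewrite (map_inj_in_uniq inj).
have sub : {subset map (rk s) s <= iota 1 (size s)}.
  move=> _ /mapP [x hx ->]; rewrite mem_iota /rk /= add1n !ltnS.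
  rewrite -(count_predC (fun y => y < x) s).
  have : 0 < count (predC (fun y => y < x)) s.
    by rewrite -has_count; apply/hasP; exists x => //=; rewrite ltnn.
  lia.
have hsz : size (iota 1 (size s)) <= size (map (rk s) s) by rewrite size_map size_iota.
have [_ eqm] := uniq_min_size um sub hsz.
by apply: uniq_perm => //; apply: iota_uniq.
Qed.

Lemma side L : uniq L -> pairwise ltn (stack_sort (stack_sort L)) ->
  standardize L = [::] \/ two_stack_sortable (standardize L).
Proof.
move=> uL pL.
case: L uL pL => [|x0 L0]; first by left.
set L := x0 :: L0 => uL pL; right.
have hsz : size (standardize L) = size L by rewrite std_map size_map.
have e1 : stack_sort (standardize L) = map (rk L) (stack_sort L).
  by rewrite std_map ss_map //; apply: rk_mono.
have e2 : stack_sort (stack_sort (standardize L)) = map (rk L) (stack_sort (stack_sort L)).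
  rewrite e1 ss_map // => x y hx hy; apply: rk_mono;
  by rewrite -(perm_mem (ss_perm L)).
split; first by rewrite hsz.
split; first by rewrite /is_perm hsz; apply: std_perm.
rewrite hsz.
apply: (irr_sorted_eq ltn_trans ltnn); last first.
- apply: perm_mem; exact: perm_trans (perm_trans (ss_perm _) (ss_perm _)) (std_perm uL).
- exact: iota_ltn_sorted.
rewrite e2 sorted_pairwise; last exact: ltn_trans.
rewrite pairwise_map; apply: (@sub_in_pairwise _ (mem L)) pL.
  move=> x y hx hy /=; exact: rk_mono.
apply/allP => x; rewrite (perm_mem (ss_perm _)) (perm_mem (ss_perm _)) //.
Qed.

Theorem proposition4 (n : nat) (pi : seq nat) :
  1 <= n -> size pi = n -> two_stack_sortable pi ->
  let pi_l := take (index n pi) pi in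
  let pi_r := drop (index n pi).+1 pi in
  (standardize pi_l = [::] \/ two_stack_sortable (standardize pi_l)) /\
  (standardize pi_r = [::] \/ two_stack_sortable (standardize pi_r)).
Proof.
move=> hn hs [hpos [hperm hSS]] pi_l pi_r; rewrite /pi_l /pi_r.
rewrite /is_perm hs in hperm; rewrite hs in hSS.
have upi : uniq pi by rewrite (perm_uniq hperm) iota_uniq.
have hmem := perm_mem hperm.
have hnpi : n \in pi by rewrite hmem mem_iota; lia.
set L := take (index n pi) pi; set R := drop (index n pi).+1 pi.
have e : pi = L ++ n :: R.
  by rewrite -{1}(cat_take_drop (index n pi) pi) (drop_nth 0) ?index_mem // nth_index.
have := upi; rewrite e cat_uniq /= => /and4P[uL hnh nR uR].
have nL : n \notin L by apply: contra hnh => h; rewrite /= h.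
have le x : x \in pi -> x <= n by rewrite hmem mem_iota; lia.
have aL : all (fun x => x < n) L.
  apply/allP => x hx; have := le x; rewrite e mem_cat hx => /(_ isT).
  by rewrite leq_eqVlt; case/orP => // /eqP ex; move: nL; rewrite -ex hx.
have aR : all (fun x => x < n) R.
  apply/allP => x hx; have := le x; rewrite e mem_cat inE hx !orbT => /(_ isT).
  by rewrite leq_eqVlt; case/orP => // /eqP ex; move: nR; rewrite -ex hx.
have aR' : all (fun x => x <= n) R by apply/allP => x /(allP aR) /ltnW.
rewrite e ss_split // catA in hSS.
rewrite ss_split // in hSS; last first.
  by rewrite all_cat (perm_all _ (ss_perm L)) (perm_all _ (ss_perm R)) aL aR.
have := iota_ltn_sorted 1 n; rewrite -hSS sorted_pairwise; last exact: ltn_trans.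
rewrite pairwise_cat => /and3P[_ p _].
have /andP[pL pR] := sortable_cat (leqnn _) (erefl _) p.
by split; apply: side.
Qed.
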